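(* Let $\mathcal G=(V,E,r)$ be a graph. If $a\in\mathbf A(\mathcal G)$ and $\operatorname{supp}(a)$ is acyclic, then $\mathsf L(a)=\{l\}$ with $l=\sum_{v\in V}a(v)-\sum_{e\in E}a(e)$. In particular $|\mathsf L(a)|=1$.
   Context: A graph $\mathcal G=(V,E,r)$ consists of a finite vertex set $V$, a finite edge set $E$ disjoint from $V$, and a map $r$ assigning to each edge a two-element subset of $V$; multiple edges allowed, no loops. Acyclic means containing no cycle, where two edges with the same pair of endpoints form a cycle of length $2$. An agglomeration on $\mathcal G$ is a function $a\colon V\cup E\to\mathbb N_0$ with $a(v)\ge a(e)$ whenever $v$ is incident with $e$; $\mathbf A(\mathcal G)$ is the monoid of agglomerations under pointwise addition. $\operatorname{supp}(a)$ is the subgraph of vertices and edges where $a$ is positive. $\mathsf L(a)$ is the set of $n\in\mathbb N_0$ such that $a$ is a sum of $n$ atoms (nonzero elements not expressible as a sum of two nonzero elements), with $\mathsf L(0)=\{0\}$. *)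

(* Defs.v *)
From mathcomp Require Import all_boot all_order all_algebra.
Set Implicit Arguments. Unset Strict Implicit. Unset Printing Implicit Defensive.

(* A graph G = (V, E, r): V, E finite types (disjoint since they are distinct
   types), r e a two-element subset of V (multiple edges allowed, no loops).
   The hypothesis  forall e, #|r e| = 2  is carried in the theorem. *)

Section Graphs.
Variables (V E : finType) (r : E -> {set V}).

(* functions V ∪ E -> N0, encoded on the disjoint sum V + E *)
Definition vefun := {ffun V + E -> nat}.

Definition is_agg (a : vefun) : Prop :=
  forall (v : V) (e : E), v \in r e -> a (inr e) <= a (inl v).

Definition agg0 : vefun := [ffun _ => 0].
Definition agg_add (b c : vefun) : vefun := [ffun x => b x + c x].

Definition is_atom (a : vefun) : Prop :=
  is_agg a /\ a <> agg0 /\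
  ~ (exists b c : vefun, [/\ is_agg b, is_agg c, b <> agg0, c <> agg0 &
                             a = agg_add b c]).

Definition agg_sum (s : seq vefun) : vefun := [ffun x => \sum_(b <- s) b x].

Definition lengths (a : vefun) : nat -> Prop :=
  fun n => exists s : seq vefun,
    [/\ size s = n, (forall b, b \in s -> is_atom b) & a = agg_sum s].

(* a cycle of length k+2 >= 2 in the subgraph with vertex predicate Q and edge
   predicate P: distinct vertices v_0..v_{k+1}, distinct edges e_0..e_{k+1},
   with e_i joining v_i and v_{i+1 mod (k+2)}.  For length 2 this is two
   distinct edges with the same pair of endpoints. *)
Definition has_cycle (Q : pred V) (P : pred E) : Prop :=
  exists (k : nat) (vs : 'I_k.+2 -> V) (es : 'I_k.+2 -> E),
    [/\ injective vs, injective es, (forall i, Q (vs i)), (forall i, P (es i)) &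
        forall i, r (es i) = [set vs i; vs (ordS i)]].

Definition supp_acyclic (a : vefun) : Prop :=
  ~ has_cycle (fun v => 0 < a (inl v)) (fun e => 0 < a (inr e)).
End Graphs.

(* Main.v *)
Require Import Defs.
From mathcomp Require Import all_boot all_order all_algebra.
From mathcomp Require Import zify.
From Stdlib Require Import Classical.
Set Implicit Arguments. Unset Strict Implicit. Unset Printing Implicit Defensive.

Definition adj (V E : finType) (r : E -> {set V}) (F : {set E}) : rel V :=
  fun v w => [exists f in F, (v \in r f) && (w \in r f)].

Lemma adj_sym (V E : finType) (r : E -> {set V}) F : symmetric (adj r F).
Proof. by move=> v w; apply/existsP/existsP => -[f /andP[fF /andP[a b]]]; exists f; rewrite fF a b. Qed.

Lemma connect_mono (V E : finType) (r : E -> {set V}) (F1 F2 : {set E}) u v :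
  F1 \subset F2 -> connect (adj r F1) u v -> connect (adj r F2) u v.
Proof.
move=> sF; apply: connect_sub => x y /existsP[f /andP[fF h]].
by apply: connect1; apply/existsP; exists f; rewrite (subsetP sF).
Qed.

Lemma pair_eqS (V : finType) (A : {set V}) x y :
  #|A| = 2 -> x \in A -> y \in A -> x != y -> A = [set x; y].
Proof.
move=> cA xA yA nxy; apply/eqP; rewrite eq_sym eqEcard cards2 nxy cA leqnn andbT.
by apply/subsetP => z; rewrite !inE => /orP[]/eqP->.
Qed.

Lemma has_cycle_mono (V E : finType) (r : E -> {set V}) (Q Q' : pred V) (P P' : pred E) :
  (forall v, Q v -> Q' v) -> (forall e, P e -> P' e) ->
  has_cycle r Q P -> has_cycle r Q' P'.
Proof.
move=> hQ hP [k [vs [es [i1 i2 i3 i4 i5]]]].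
exists k, vs, es; split => // i; [exact: hQ | exact: hP].
Qed.

Lemma decomp (V E : finType) (r : E -> {set V}) (F : {set E}) e w u :
  connect (adj r F) w u ->
  connect (adj r (F :\ e)) w u \/ exists2 z, z \in r e & connect (adj r (F :\ e)) w z.
Proof.
move/connectP => [p pth ->]; elim: p w pth => [|w' p IH] w /=; first by left.
move=> /andP[/existsP[f /and3P[fF wf w'f]] pth].
case: (IH _ pth) => [h|[z zr h]].
- have [fe|fne] := eqVneq f e; first by right; exists w; rewrite -?fe.
  left; apply: connect_trans h; apply: connect1; apply/existsP; exists f.
  by rewrite !inE fne fF wf w'f.
- have [fe|fne] := eqVneq f e; first by right; exists w; rewrite -?fe.
  right; exists z => //; apply: connect_trans h; apply: connect1; apply/existsP; exists f.
  by rewrite !inE fne fF wf w'f.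
Qed.

Lemma cyc (V E : finType) (r : E -> {set V}) (hr : forall e : E, #|r e| = 2)
  (S : {set V}) (F : {set E}) :
  (forall f v, f \in F -> v \in r f -> v \in S) ->
  ~ has_cycle r (fun v => v \in S) (fun f => f \in F) ->
  forall e x y, e \in F -> x \in r e -> y \in r e -> x != y ->
  ~~ connect (adj r (F :\ e)) x y.
Proof.
move=> clo acy e x y eF xe ye nxy; apply/negP => /connectP[p pth lst].
move: lst; case: (shortenP pth) => p' pth' uq _ lst.
case: p' pth' uq lst => [|x1 p1] pth' uq lst; first by move: nxy; rewrite lst eqxx.
set s := x :: x1 :: p1.
pose k := size p1.
have ss : size s = k.+2 by [].
pose vs := fun i : 'I_k.+2 => nth x s i.
have vs_inj : injective vs.
  by move=> i j /eqP; rewrite /vs nth_uniq ?ss ?ltn_ord // => /eqP/val_inj.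
have ordS_ne : forall i : 'I_k.+2, i != ordS i.
  move=> i; apply/eqP => /(congr1 val) /=.
  have := ltn_ord i; case: (ltnP i k.+1) => hi hi2.
    by rewrite modn_small //; lia.
  have -> : nat_of_ord i = k.+1 by apply/eqP; rewrite eqn_leq hi -ltnS hi2.
  by rewrite modnn.
have ordS_val : forall i : 'I_k.+2, i < k.+1 -> val (ordS i) = i.+1.
  by move=> i hi /=; rewrite modn_small.
pose es := fun i : 'I_k.+2 => if val i < k.+1 then
   odflt e [pick f in F :\ e | (vs i \in r f) && (vs (ordS i) \in r f)] else e.
have es_ok : forall i, [/\ es i \in F, (val i < k.+1 -> es i \in F :\ e),
                          vs i \in r (es i) & vs (ordS i) \in r (es i)].
  move=> i; rewrite /es; case: ifP => hi.
    case: pickP => [f /andP[fF /andP[h1 h2]]|none] /=.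
      by split=> //; move: fF; rewrite !inE => /andP[].
    exfalso; move/pathP: pth' => /(_ x i hi) /existsP[f /andP[fF /andP[h1 h2]]].
    have := none f; rewrite fF /= /vs h1 /=.
    by rewrite modn_small // /s /= h2.
  have -> : i = ord_max by apply/val_inj/eqP; rewrite /= eqn_leq -ltnS ltn_ord leqNgt hi.
  have -> : ordS (@ord_max k.+1) = ord0 by apply: val_inj; rewrite /= modnn.
  split => //; rewrite /vs /= ?xe //.
  by rewrite /k -[size p1]/((size (x1::p1)).-1) nth_last -lst.
have r_es : forall i, r (es i) = [set vs i; vs (ordS i)].
  move=> i; have [_ _ h1 h2] := es_ok i.
  apply: (pair_eqS (hr (es i)) h1 h2).
  by apply/negP => /eqP /vs_inj /eqP; rewrite (negbTE (ordS_ne i)).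
apply: acy; exists k, vs, es; split => //.
- move=> i j eij; apply/eqP/negP => nij.
  have hi : vs i \in r (es j) by rewrite -eij; case: (es_ok i).
  have hj : vs j \in r (es i) by rewrite eij; case: (es_ok j).
  rewrite r_es !inE in hi; rewrite r_es !inE in hj.
  case/orP: hi => /eqP/vs_inj hi; first by rewrite hi eqxx in nij.
  case/orP: hj => /eqP/vs_inj hj; first by rewrite hj eqxx in nij.
  case: (ltnP i k.+1) => ik; case: (ltnP j k.+1) => jk.
  + move: (congr1 val hi) (congr1 val hj); rewrite !ordS_val //. move=> a b; have : nat_of_ord i = nat_of_ord j + 1 by rewrite addn1; exact: a. have : nat_of_ord j = nat_of_ord i + 1 by rewrite addn1; exact: b. lia.
  + have [_ h _ _] := es_ok i; move: (h ik); rewrite eij /es ltnNge jk /=.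
    by rewrite !inE eqxx.
  + have [_ h _ _] := es_ok j; move: (h jk); rewrite -eij /es ltnNge ik /=.
    by rewrite !inE eqxx.
  + have := ltn_ord i; have := ltn_ord j; move: nij.
    by rewrite -(inj_eq val_inj) /=; lia.
- by move=> i; have [h _ h2 _] := es_ok i; exact: clo h h2.
- by move=> i; case: (es_ok i).
Qed.

Lemma LB (V E : finType) (r : E -> {set V}) (hr : forall e : E, #|r e| = 2)
  (S : {set V}) : forall n (F : {set E}), #|F| = n ->
  (forall f v, f \in F -> v \in r f -> v \in S) ->
  ~ has_cycle r (fun v => v \in S) (fun f => f \in F) ->
  forall T : {set V}, T \subset S ->
  (forall t t', t \in T -> t' \in T -> t != t' -> ~~ connect (adj r F) t t') ->
  #|F| + #|T| <= #|S|.
Proof.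
elim=> [|n IH] F cF clo acy T sTS dis.
  by rewrite cF add0n subset_leq_card.
have : F != set0 by rewrite -card_gt0 cF.
case/set0Pn => e eF.
have cF' : #|F :\ e| = n by move: cF; rewrite (cardsD1 e) eF add1n => -[].
have clo' : forall f v, f \in F :\ e -> v \in r f -> v \in S.
  by move=> f v; rewrite inE => /andP[_]; exact: clo.
have acy' : ~ has_cycle r (fun v => v \in S) (fun f => f \in F :\ e).
  by move=> h; apply: acy; apply: has_cycle_mono h => // f; rewrite inE => /andP[].
have sub' : F :\ e \subset F by apply: subsetDl.
have /cards2P [x [y [nxy rexy]]] : #|r e| == 2 by rewrite hr.
have xe : x \in r e by rewrite rexy !inE eqxx.
have ye : y \in r e by rewrite rexy !inE eqxx orbT.
have ncxy := cyc hr clo acy eF xe ye nxy.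
have adjxy : adj r F x y by apply/existsP; exists e; rewrite eF xe ye.
have csym : connect_sym (adj r (F :\ e)) := sym_connect_sym (adj_sym r _).
have csymF : connect_sym (adj r F) := sym_connect_sym (adj_sym r _).
suff [z [zS zT dis']] : exists z, [/\ z \in S, z \notin T &
   forall t t', t \in z |: T -> t' \in z |: T -> t != t' -> ~~ connect (adj r (F :\ e)) t t'].
  have := IH _ cF' clo' acy' (z |: T).
  rewrite cardsU1 zT cF' cF => h.
  have hs : z |: T \subset S by rewrite subUset sub1set zS sTS.
  have := h hs dis'; lia.
case: (boolP [exists t0 in T, connect (adj r (F :\ e)) x t0]) => [/existsP[t0 /andP[t0T cxt0]]|nex].
- have key : forall t, t \in T -> ~~ connect (adj r (F :\ e)) y t.
    move=> t tT; apply/negP => cyt; case: (eqVneq t t0) => [ett0|ntt0].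
      by subst t; apply: (negP ncxy); apply: connect_trans cxt0 _; rewrite csym.
    have := dis _ _ t0T tT; rewrite eq_sym ntt0 => /(_ isT) /negP; apply.
    apply: connect_trans (connect_mono sub' _) _; first by rewrite csym; exact: cxt0.
    apply: connect_trans (connect1 adjxy) _; exact: connect_mono sub' cyt.
  exists y; split; first exact: clo _ _ eF ye.
    by apply/negP => yT; move: (key y yT); rewrite connect0.
  move=> t t'; rewrite !inE => /orP[/eqP->|tT] /orP[/eqP->|t'T] ntt'.
  + by rewrite eqxx in ntt'.
  + exact: key.
  + by rewrite csym; exact: key.
  + apply: contra (dis _ _ tT t'T ntt'); exact: connect_mono sub'.
- have key : forall t, t \in T -> ~~ connect (adj r (F :\ e)) x t.
    move=> t tT; apply/negP => c; apply: (negP nex); apply/existsP; exists t; by rewrite tT c.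
  exists x; split; first exact: clo _ _ eF xe.
    by apply/negP => xT; move: (key x xT); rewrite connect0.
  move=> t t'; rewrite !inE => /orP[/eqP->|tT] /orP[/eqP->|t'T] ntt'.
  + by rewrite eqxx in ntt'.
  + exact: key.
  + by rewrite csym; exact: key.
  + apply: contra (dis _ _ tT t'T ntt'); exact: connect_mono sub'.
Qed.

Lemma UB (V E : finType) (r : E -> {set V}) (hr : forall e : E, #|r e| = 2)
  (S : {set V}) : forall n (F : {set E}), #|F| = n ->
  (forall f v, f \in F -> v \in r f -> v \in S) ->
  forall T : {set V}, (forall w, w \in S -> exists2 t, t \in T & connect (adj r F) w t) ->
  #|S| <= #|F| + #|T|.
Proof.
elim=> [|n IH] F cF clo T cov.
  rewrite cF add0n; apply: subset_leq_card; apply/subsetP => w wS.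
  have [t tT] := cov w wS; move/connectP => [[|z p] pth /= tE]; first by rewrite -tE.
  case/andP: pth => /existsP[f /andP[fF _]] _; move: fF.
  by rewrite (cards0_eq cF) inE.
have : F != set0 by rewrite -card_gt0 cF.
case/set0Pn => e eF.
have cF' : #|F :\ e| = n by move: cF; rewrite (cardsD1 e) eF add1n => -[].
have clo' : forall f v, f \in F :\ e -> v \in r f -> v \in S.
  by move=> f v; rewrite inE => /andP[_]; exact: clo.
have csymF : connect_sym (adj r F) := sym_connect_sym (adj_sym r _).
have : r e != set0 by rewrite -card_gt0 hr.
case/set0Pn => x xe.
have [t0 t0T cxt0] := cov x (clo _ _ eF xe).
have [z0 z0e ct0z0] : exists2 z, z \in r e & connect (adj r (F :\ e)) t0 z.
  rewrite csymF in cxt0.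
  by case: (decomp e cxt0) => [c|[z ze c]]; [exists x | exists z].
have cov' : forall w, w \in S -> exists2 t, t \in (T :\ t0) :|: r e & connect (adj r (F :\ e)) w t.
  move=> w wS; have [t tT cwt] := cov w wS.
  case: (decomp e cwt) => [c|[z ze c]]; last by exists z; rewrite // inE ze orbT.
  case: (eqVneq t t0) => [ett0|ntt0].
    by subst t; exists z0; [rewrite inE z0e orbT | apply: connect_trans c ct0z0].
  by exists t => //; rewrite !inE ntt0 tT.
have h := IH _ cF' clo' _ cov'.
apply: leq_trans h _; rewrite cF.
have := (leq_card_setU (T :\ t0) (r e)).1.
have := cardsD1 t0 T; rewrite t0T hr; lia.
Qed.

Definition phi (V E : finType) (a : vefun V E) : int :=
  ((\sum_(v : V) a (inl v))%:Z - (\sum_(e : E) a (inr e))%:Z)%R.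

Lemma phi_add (V E : finType) (b c : vefun V E) :
  phi (agg_add b c) = (phi b + phi c)%R.
Proof.
rewrite /phi /agg_add.
under eq_bigr do rewrite ffunE.
under [X in (_ - X%:Z)%R]eq_bigr do rewrite ffunE.
rewrite !big_split /= !PoszD; lia.
Qed.

Lemma agg_sum_cons (V E : finType) (b : vefun V E) s :
  agg_sum (b :: s) = agg_add b (agg_sum s).
Proof. by apply/ffunP => x; rewrite !ffunE big_cons. Qed.

Lemma agg_sum_cat (V E : finType) (s1 s2 : seq (vefun V E)) :
  agg_sum (s1 ++ s2) = agg_add (agg_sum s1) (agg_sum s2).
Proof. by apply/ffunP => x; rewrite !ffunE big_cat. Qed.

Lemma le_agg_sum (V E : finType) (s : seq (vefun V E)) b x :
  b \in s -> b x <= agg_sum s x.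
Proof.
elim: s => [|c s IH] //=; rewrite inE agg_sum_cons ffunE => /orP[/eqP->|bs].
  exact: leq_addr.
by apply: leq_trans (IH bs) _; apply: leq_addl.
Qed.

Definition mass (V E : finType) (a : vefun V E) := \sum_(x : V + E) a x.

Lemma mass_add (V E : finType) (b c : vefun V E) :
  mass (agg_add b c) = mass b + mass c.
Proof. by rewrite /mass -big_split; apply: eq_bigr => x _; rewrite ffunE. Qed.

Lemma mass_gt0 (V E : finType) (c : vefun V E) : c <> agg0 V E -> 0 < mass c.
Proof.
move=> nc; rewrite lt0n; apply/negP => /eqP /eqP; rewrite sum_nat_eq0 => /forallP h.
by apply: nc; apply/ffunP => x; rewrite ffunE; apply/eqP; exact: h.
Qed.

Lemma exist_fact (V E : finType) (r : E -> {set V}) :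
  forall m (a : vefun V E), mass a < m -> is_agg r a ->
  exists s, (forall b, b \in s -> is_atom r b) /\ a = agg_sum s.
Proof.
elim=> [|m IH] a // lam ha.
have [->|na] := eqVneq a (agg0 V E).
  by exists [::]; split => //; apply/ffunP => x; rewrite !ffunE big_nil.
case: (classic (is_atom r a)) => [at_a|nat_a].
  exists [:: a]; split; first by move=> b; rewrite inE => /eqP->.
  by apply/ffunP => x; rewrite !ffunE big_seq1.
have [b [c [hb hc nb nc eab]]] : exists b c : vefun V E, [/\ is_agg r b, is_agg r c,
    b <> agg0 V E, c <> agg0 V E & a = agg_add b c].
  apply: NNPP => hne; apply: nat_a; split => //; split => //; exact/eqP.
have mb := mass_gt0 nb; have mc := mass_gt0 nc.
move: lam; rewrite eab mass_add => lam.
have [sb [atb eb]] := IH b ltac:(lia) hb.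
have [sc [atc ec]] := IH c ltac:(lia) hc.
exists (sb ++ sc); split; last by rewrite agg_sum_cat -eb -ec.
by move=> d; rewrite mem_cat => /orP[]; [exact: atb | exact: atc].
Qed.

Lemma atom_phi (V E : finType) (r : E -> {set V}) (hr : forall e : E, #|r e| = 2)
  (b : vefun V E) : is_atom r b -> supp_acyclic r b -> phi b = 1%R.
Proof.
move=> [hb [nb hsplit]] acyb.
pose S := [set v | 0 < b (inl v)].
pose F := [set f | 0 < b (inr f)].
have clo : forall f v, f \in F -> v \in r f -> v \in S.
  by move=> f v; rewrite !inE => fF vf; apply: leq_trans fF (hb _ _ vf).
have acy : ~ has_cycle r (fun v => v \in S) (fun f => f \in F).
  by move=> h; apply: acyb; apply: has_cycle_mono h => [v|f]; rewrite inE.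
have csymF : connect_sym (adj r F) := sym_connect_sym (adj_sym r _).
(* b is 0/1 valued *)
pose t : vefun V E := [ffun x => nat_of_bool (0 < b x)].
pose c : vefun V E := [ffun x => b x - nat_of_bool (0 < b x)].
have ht : is_agg r t.
  move=> v f vf; rewrite !ffunE; have := hb v f vf.
  by case: (b (inr f)) => [|m] //=; case: (b (inl v)).
have hc : is_agg r c.
  move=> v f vf; rewrite !ffunE; have := hb v f vf.
  case: (b (inr f)) => [|m] //=; case: (b (inl v)) => [|n] //=; lia.
have ebtc : b = agg_add t c.
  by apply/ffunP => y; rewrite !ffunE; case: (b y) => [|n] //=; lia.
have [x bx] : exists x, b x != 0.
  apply: NNPP => h; apply: nb; apply/ffunP => x; rewrite ffunE.
  by apply/eqP; apply: NNPP => hx; apply: h; exists x; apply/negP.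
have nt : t <> agg0 V E.
  by move/ffunP/(_ x); rewrite !ffunE; move: bx; case: (b x).
have c0 : c = agg0 V E.
  apply: NNPP => nc; apply: hsplit; exists t, c; split => //.
have b01 : forall x, b x = nat_of_bool (0 < b x).
  move=> y; have := congr1 (fun g : vefun V E => g y) c0; rewrite !ffunE.
  by case: (b y) => [|[|n]].
have phiSF : phi b = (#|S|%:Z - #|F|%:Z)%R.
  rewrite /phi; congr (_%:Z - _%:Z)%R.
    rewrite -sum1_card [RHS]big_mkcond /=; apply: eq_bigr => v _.
    by rewrite {1}b01 inE; case: (0 < b (inl v)).
  rewrite -sum1_card [RHS]big_mkcond /=; apply: eq_bigr => f _.
  by rewrite {1}b01 inE; case: (0 < b (inr f)).
have [u uS] : exists u, u \in S.
  case: x bx => [v|f] bx; first by exists v; rewrite inE lt0n.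
  have : r f != set0 by rewrite -card_gt0 hr.
  case/set0Pn => v vf; exists v; apply: (clo f) => //; rewrite inE lt0n.
  exact: bx.
case: (boolP [forall w in S, connect (adj r F) u w]) => [/forall_inP conn|].
- have hub := UB hr (erefl _) clo (T := [set u]) _.
  have hlb := LB hr (erefl _) clo acy (T := [set u]) _ _.
  rewrite phiSF; rewrite cards1 in hub hlb.
  have h1 : #|S| <= #|F| + 1.
    apply: hub => w wS; exists u; first by rewrite inE.
    by rewrite csymF; exact: conn.
  have h2 : #|F| + 1 <= #|S|.
    apply: hlb; first by rewrite sub1set.
    by move=> t1 t2; rewrite !inE => /eqP-> /eqP->; rewrite eqxx.
  lia.
- move/forall_inPn => [w wS ncw].
  exfalso.
  pose C := [set v | connect (adj r F) u v].
  pose inC := fun x : V + E => match x with inl v => v \in C | inr f => r f \subset C end.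
  pose b1 : vefun V E := [ffun x => if inC x then b x else 0].
  pose b2 : vefun V E := [ffun x => if inC x then 0 else b x].
  apply: hsplit; exists b1, b2; split.
  + move=> v f vf; rewrite !ffunE /=.
    case: ifP => // /subsetP sC; rewrite sC //; exact: hb.
  + move=> v f vf; rewrite !ffunE /=.
    case: ifP => [//|nsC]; case: ifP => [vC|_]; last exact: hb.
    case: (posnP (b (inr f))) => [->//|bf].
    exfalso; move/negP: nsC; apply; apply/subsetP => w' w'f.
    move: vC; rewrite !inE => cuv; apply: connect_trans cuv (connect1 _).
    by apply/existsP; exists f; rewrite inE bf vf w'f.
  + move/ffunP/(_ (inl u)); rewrite !ffunE /= inE connect0 => /eqP.
    by move: uS; rewrite inE lt0n => /negPf ->.
  + move/ffunP/(_ (inl w)); rewrite !ffunE /= inE (negbTE ncw) => /eqP.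
    by move: wS; rewrite inE lt0n => /negPf ->.
  + by apply/ffunP => y; rewrite !ffunE; case: (inC y); rewrite ?addn0.
Qed.

Theorem lemma4p18 (V E : finType) (r : E -> {set V})
  (hr : forall e : E, #|r e| = 2) (a : vefun V E) :
  is_agg r a -> supp_acyclic r a ->
  forall n : nat, lengths r a n <->
    (n%:Z = (\sum_(v : V) a (inl v))%:Z - (\sum_(e : E) a (inr e))%:Z)%R.
Proof.
move=> ha acya.
have key : forall s, (forall b, b \in s -> is_atom r b) -> a = agg_sum s ->
    phi a = ((size s)%:Z)%R.
  move=> s ats eas.
  have acys : forall b, b \in s -> supp_acyclic r b.
    move=> b bs h; apply: acya; apply: has_cycle_mono h => [v|f] hx;
      rewrite eas; apply: leq_trans hx (le_agg_sum _ bs).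
  rewrite eas; clear eas.
  elim: s ats acys => [|b s IH] ats acys.
    by rewrite /phi !big1 // => ? _; rewrite ffunE big_nil.
  rewrite agg_sum_cons phi_add (atom_phi hr (ats b (mem_head _ _)) (acys b (mem_head _ _))).
  rewrite IH; last by move=> c cs; apply: acys; rewrite inE cs orbT.
    by rewrite /=; lia.
  by move=> c cs; apply: ats; rewrite inE cs orbT.
move=> n; change (lengths r a n <-> (n%:Z = phi a)%R); split.
- by move=> [s [sz ats eas]]; rewrite (key s ats eas) sz.
- move=> h; have [s [ats eas]] := exist_fact (ltnSn (mass a)) ha.
  exists s; split => //; have := key s ats eas; rewrite -h.
  by move=> [].
Qed.
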